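(* Let $s_1,s_2$ be integers and $t,r_1,r_2$ nonnegative integers with $r_1\ge t$. Then in $\mathbb{Z}[x]$, $$\varphi^{s_1+t,\,s_2}_{r_1-t,\,r_2}(x)=\varphi^{s_1-t,\,s_2}_{r_1-t,\,r_2}(x)-\sum_{m=1}^{2t}\binom{2t}{m}\binom{r_1-t}{m}\,2^m\,m!\;\varphi^{s_1+t,\,s_2}_{r_1-t-m,\,r_2}(x).$$
   Context: For integers $a,b$ and integers $n,m$ define the polynomial $$\varphi^{a,b}_{n,m}(x)=\prod_{j=0}^{n-1}\bigl(x^2-x-2(a+j)\bigr)\prod_{l=0}^{m-1}\bigl(x-(b+l)\bigr)$$ when $n,m\ge0$ (empty products equal $1$), and $\varphi^{a,b}_{n,m}(x)=0$ if $n<0$ or $m<0$. (In the paper this is written $\varphi^{a,b}_{2n+m}(x)$.) Binomial coefficients $\binom{N}{m}$ are $0$ when $m>N$. *)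

(* Defs.v *)
From HB Require Import structures.
From mathcomp Require Import all_boot all_order all_algebra.
Set Implicit Arguments. Unset Strict Implicit. Unset Printing Implicit Defensive.
Import Order.TTheory GRing.Theory Num.Theory.
Local Open Scope ring_scope.

Definition varphi (a b n m : int) : {poly int} :=
  if (0 <= n) && (0 <= m) then
    (\prod_(j < `|n|%N) ('X^2 - 'X - ((2 * (a + j%:Z))%:P)))
    * (\prod_(l < `|m|%N) ('X - (b + l%:Z)%:P))
  else 0.

(* Main.v *)
Require Import Defs.
From HB Require Import structures.
From mathcomp Require Import all_boot all_order all_algebra.
From mathcomp Require Import ring zify.
Import Order.TTheory GRing.Theory Num.Theory.
Local Open Scope ring_scope.

Definition Pp (c : int) (n : nat) : {poly int} :=
  \prod_(j < n) ('X^2 - 'X - ((2 * (c + j%:Z))%:P)).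

Lemma Pp_rec (c : int) (n : nat) :
  Pp (c - 1) n.+1 = Pp c n.+1 + ((2 * n.+1)%N)%:R * Pp c n.
Proof.
rewrite /Pp big_ord_recl big_ord_recr /=.
rewrite (eq_bigr (fun j : 'I_n => 'X^2 - 'X - ((2 * (c + j%:Z))%:P))); last first.
  by move=> i _; rewrite /bump /=; congr (_ - _%:P); lia.
set P := \prod_(j < n) _.
ring.
Qed.
Definition cf (k n m : nat) : nat := ('C(k,m) * 'C(n,m) * 2^m * m`!)%N.

Lemma cfS k n m : cf k.+1 n m = (cf k n m + (if m is m'.+1 then cf k n m' * (2 * (n - m')) else 0))%N.
Proof.
rewrite /cf; case: m => [|m]; first by rewrite !bin0 addn0.
rewrite binS factS expnS !mulnDl; congr (_ + _)%N.
have H := mul_bin_left n m.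
transitivity ('C(k, m) * (m.+1 * 'C(n, m.+1)) * (2 * 2 ^ m) * m`!)%N; first by ring.
rewrite H. ring.
Qed.

Lemma Pp_rec' (c : int) (n : nat) :
  Pp (c - 1) n = Pp c n + ((2 * n)%N)%:R * Pp c n.-1.
Proof.
case: n => [|n]; first by rewrite /Pp !big_ord0 muln0 mul0r addr0.
exact: Pp_rec.
Qed.

Lemma Pp_shift (k : nat) : forall (c : int) (n : nat),
  Pp (c - k%:Z) n = \sum_(m < k.+1) (cf k n m)%:R * Pp c (n - m).
Proof.
elim: k => [|k IH] c n.
  by rewrite big_ord_recr big_ord0 /= add0r subr0 /cf !bin0 mul1r subn0.
have -> : c - k.+1%:Z = (c - 1) - k%:Z by lia.
rewrite IH.
under eq_bigr => m _ do rewrite Pp_rec' mulrDr -subnS.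
rewrite big_split /=.
under [RHS]eq_bigr => m _ do rewrite cfS natrD mulrDl.
rewrite big_split /= [X in _ = X + _]big_ord_recr /= [X in _ = _ + X]big_ord_recl /=.
rewrite [cf k n k.+1]/cf bin_small // !mul0n mul0r addr0 mul0r add0r.
congr (_ + _); apply: eq_bigr => m _.
by rewrite /bump /= add1n !add0n !natrM mulrA.
Qed.

Lemma varphi_nat (a b : int) (n m : nat) :
  varphi a b n%:Z m%:Z = Pp a n * \prod_(l < m) ('X - (b + l%:Z)%:P).
Proof. by rewrite /varphi. Qed.

Theorem lemma3p29 (s1 s2 : int) (t r1 r2 : nat) (Ht : (t <= r1)%N) :
  varphi (s1 + t%:Z) s2 (r1%:Z - t%:Z) r2%:Z =
  varphi (s1 - t%:Z) s2 (r1%:Z - t%:Z) r2%:Z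
  - \sum_(1 <= m < (2 * t).+1)
      (('C(2 * t, m) * 'C(r1 - t, m) * 2 ^ m * m`!)%N)%:R
        * varphi (s1 + t%:Z) s2 (r1%:Z - t%:Z - m%:Z) r2%:Z.
Proof.
set Q := \prod_(l < r2) ('X - (s2 + l%:Z)%:P).
have En : r1%:Z - t%:Z = (r1 - t)%N%:Z by lia.
rewrite En !varphi_nat.
have -> : s1 - t%:Z = (s1 + t%:Z) - (2 * t)%N%:Z by lia.
rewrite Pp_shift mulr_suml -(big_mkord xpredT (fun m => (cf (2 * t) (r1 - t) m)%:R * Pp (s1 + t) (r1 - t - m) * Q)).
rewrite big_ltn // /cf !bin0 subn0 /= mul1r.
set S1 := \sum_(1 <= i < _) _.
set S2 := \sum_(1 <= i < _) _.
suff -> : S1 = S2 by rewrite addrK.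
apply: eq_bigr => m _.
case: (leqP m (r1 - t)) => Hm.
  have -> : (r1 - t)%N%:Z - m%:Z = (r1 - t - m)%N%:Z by lia.
  by rewrite varphi_nat mulrA.
by rewrite (bin_small Hm) !muln0 !mul0n !mul0r.
Qed.
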